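(* Let $T:X\to X$ be a continuous map on a compact metric space $X$ such that $\mathcal M^p_T(X)$ is dense in $\mathcal M_T(X)$. Let $\varphi=(\varphi_1,\ldots,\varphi_d)\in C(X,\mathbb R^d)$ and $h\in\operatorname{int}(\mathrm{Rot}(\varphi))$. Then $\mathrm{rv}_\varphi^{-1}(h)\cap\mathcal N_T$ is dense in $\mathrm{rv}_\varphi^{-1}(h)$.
   Context: $\mathcal M_T(X)$ is the set of $T$-invariant Borel probability measures with the weak* topology; $\mathcal M^p_T(X)$ is the set of invariant measures supported on a single periodic orbit. For $\mu\in\mathcal M_T(X)$, $\mathrm{rv}_\varphi(\mu)=(\int\varphi_1d\mu,\dots,\int\varphi_dd\mu)$, $\mathrm{Rot}(\varphi)=\{\mathrm{rv}_\varphi(\mu):\mu\in\mathcal M_T(X)\}\subset\mathbb R^d$, and $\mathrm{rv}_\varphi^{-1}(h)\subset \mathcal M_T(X)$ carries the subspace topology. Let $\Delta^{d+1}=\{(\lambda_1,\dots,\lambda_{d+1})\in(0,1)^{d+1}:\sum\lambda_i=1\}$. $\mathcal N_T$ is the set of measures $\sum_{i=1}^{d+1}\lambda_i\mu_i$ with $\mu_i\in\mathcal M^p_T(X)$, $(\lambda_1,\dots,\lambda_{d+1})\in\Delta^{d+1}$, and such that the vectors $\mathrm{rv}_\varphi(\mu_i)-\mathrm{rv}_\varphi(\mu_{d+1})$, $i=1,\dots,d$, span $\mathbb R^d$. *)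

(* Defs.v *)
From HB Require Import structures.
From mathcomp Require Import all_boot all_order all_algebra.
From mathcomp Require Import all_classical all_reals all_analysis.
Set Implicit Arguments. Unset Strict Implicit. Unset Printing Implicit Defensive.
Import Order.TTheory GRing.Theory Num.Theory.
Import numFieldNormedType.Exports.
Local Open Scope classical_set_scope.
Local Open Scope ring_scope.

Definition borel (X : ptopologicalType) := g_sigma_algebraType (@open X).

Definition bprob (R : realType) (X : ptopologicalType) := probability (borel X) R.

Definition invariant (R : realType) (X : ptopologicalType) (T : X -> X)
  (mu : bprob R X) : Prop :=
  forall A : set (borel X), measurable A -> mu (T @^-1` A) = mu A.

Definition MT (R : realType) (X : ptopologicalType) (T : X -> X) : set (bprob R X) :=
  [set mu | invariant T mu].

Definition MTp (R : realType) (X : ptopologicalType) (T : X -> X) : set (bprob R X) :=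
  [set mu | invariant T mu /\
    exists (x : X) (n : nat), (0 < n)%N /\ iter n T x = x /\
      mu [set y : borel X | exists2 k, (k < n)%N & y = iter k T x] = 1%E].

Definition integ (R : realType) (X : ptopologicalType) (mu : bprob R X)
  (f : X -> R) : R := fine (\int[mu]_x (f x)%:E)%E.

Definition rv (R : realType) (X : ptopologicalType) (d : nat)
  (phi : X -> 'rV[R]_d) (mu : bprob R X) : 'rV[R]_d :=
  \row_(i < d) integ mu (fun x => phi x ord0 i).

Definition Rot (R : realType) (X : ptopologicalType) (T : X -> X) (d : nat)
  (phi : X -> 'rV[R]_d) : set 'rV[R]_d :=
  rv phi @` @MT R X T.

Definition NT (R : realType) (X : ptopologicalType) (T : X -> X) (d : nat)
  (phi : X -> 'rV[R]_d) : set (bprob R X) :=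
  [set nu | exists (mus : 'I_d.+1 -> bprob R X) (lam : 'I_d.+1 -> R),
     (forall i, @MTp R X T (mus i)) /\
     (forall i, 0 < lam i < 1) /\ \sum_i lam i = 1 /\
     (forall A : set (borel X), measurable A ->
        nu A = (\sum_i (lam i)%:E * mus i A)%E) /\
     row_full (\matrix_(i < d)
        (rv phi (mus (widen_ord (leqnSn d) i)) - rv phi (mus ord_max)))].

(* S is dense in U for the (subspace of the) weak* topology:
   every weak*-basic neighbourhood of every point of U meets S inside U. *)
Definition weak_dense_in (R : realType) (X : ptopologicalType)
  (S U : set (bprob R X)) : Prop :=
  forall mu, U mu ->
  forall (n : nat) (fs : 'I_n -> X -> R), (forall j, continuous (fs j)) ->
  forall eps : R, 0 < eps ->
  exists nu, S nu /\ U nu /\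
    forall j, `| integ nu (fs j) - integ mu (fs j) | < eps.

(* Main.v *)
Require Import Defs.
From HB Require Import structures.
From mathcomp Require Import all_boot all_order all_algebra.
From mathcomp Require Import all_classical all_reals all_analysis.
From mathcomp Require Import measurable_realfun.
From mathcomp Require Import ring lra.
Import Order.TTheory GRing.Theory Num.Theory.
Import numFieldNormedType.Exports.
Local Open Scope classical_set_scope.
Local Open Scope ring_scope.
Set Implicit Arguments. Unset Strict Implicit. Unset Printing Implicit Defensive.

Section Cvx.
Context (R : realType) (X : ptopologicalType) (n : nat) (lam : 'I_n -> R)
  (lam0 : forall i, 0 <= lam i) (lam1 : \sum_i lam i = 1) (mus : 'I_n -> bprob R X).
Local Open Scope ereal_scope.
Definition cvx (A : set (borel X)) : \bar R := \sum_(i < n) (lam i)%:E * mus i A.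

Let cvx0 : cvx set0 = 0.
Proof. by rewrite /cvx big1 // => i _; rewrite measure0 mule0. Qed.
Let cvx_ge0 B : 0 <= cvx B.
Proof. by rewrite /cvx; apply: sume_ge0 => i _; apply: mule_ge0; rewrite ?lee_fin. Qed.
Let cvx_sa : semi_sigma_additive cvx.
Proof.
move=> F mF tF mUF; rewrite [X in _ --> X](_ : _ =
    lim ((fun n => \sum_(0 <= i < n) cvx (F i)) @ \oo)).
  by apply: is_cvg_ereal_nneg_natsum => k _; exact: cvx_ge0.
rewrite /cvx nneseries_sum; last by move=> i j _; apply: mule_ge0; rewrite ?lee_fin.
apply: eq_bigr => i _; rewrite measure_semi_bigcup // nneseriesZl //.
Qed.
HB.instance Definition _ := isMeasure.Build _ _ _ cvx cvx0 cvx_ge0 cvx_sa.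
Let cvxT : cvx setT = 1.
Proof.
rewrite /cvx (eq_bigr (fun i => (lam i)%:E)); last by move=> i _; rewrite probability_setT mule1.
by rewrite sumEFin lam1.
Qed.
HB.instance Definition _ := Measure_isProbability.Build _ _ _ cvx cvxT.
Definition cvxp : bprob R X := cvx.
Definition seqm (k : nat) : {measure set (borel X) -> \bar R} :=
  match insub k with Some i => mscale (NngNum (lam0 i)) (mus i) | None => mzero end.
Lemma cvx_msum : cvx = msum seqm n.
Proof.
apply/funext => A; rewrite /msum /cvx; apply: eq_bigr => i _.
by rewrite /seqm valK.
Qed.
End Cvx.

Section Integ.
Context (R : realType) (X : ptopologicalType).
Local Open Scope ereal_scope.
Definition ef (f : X -> R) : borel X -> \bar R := fun x => (f x)%:E.

Lemma pos_fin (mu : bprob R X) (f : X -> R) (M : R)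
  (mf : measurable_fun [set: borel X] f) (hM : forall x, (`|f x| <= M)%R) :
  (\int[mu]_x ((ef f)^\+ x)) \is a fin_num /\
  (\int[mu]_x ((ef f)^\- x)) \is a fin_num.
Proof.
have mg : measurable_fun [set: borel X] (ef f) by apply/measurable_EFinP.
have H (g : borel X -> \bar R) : measurable_fun setT g -> (forall x, 0 <= g x <= M%:E) ->
   \int[mu]_x g x \is a fin_num.
  move=> mg' hg; rewrite ge0_fin_numE; last by apply: integral_ge0 => x _; case/andP: (hg x).
  apply: (@le_lt_trans _ _ (\int[mu]_x (cst M%:E) x)).
    apply: ge0_le_integral => //; first by move=> x _; case/andP: (hg x).
    by move=> x _; case/andP: (hg x).
  rewrite integral_cst // (_ : (mu : {measure set (borel X) -> \bar R}) setT = 1) ?mule1 ?ltry //; exact: probability_setT.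
split; apply: H.
- exact: measurable_funepos.
- move=> x; rewrite funepos_ge0 /= funeposE /= ge_max lee_fin (le_trans _ (hM x)) ?ler_norm //=.
  by rewrite lee_fin (le_trans _ (hM x)).
- exact: measurable_funeneg.
- move=> x; rewrite funeneg_ge0 /= funenegE /= ge_max lee_fin (le_trans _ (hM x)) ?ler_normr ?lexx ?orbT //=.
  by rewrite lee_fin (le_trans _ (hM x)).
Qed.

Lemma integE (mu : bprob R X) (f : X -> R) (M : R)
  (mf : measurable_fun [set: borel X] f) (hM : forall x, (`|f x| <= M)%R) :
  integ mu f = (fine (\int[mu]_x ((ef f)^\+ x)) - fine (\int[mu]_x ((ef f)^\- x)))%R.
Proof.
have [h1 h2] := pos_fin mu mf hM.
by rewrite /integ integralE fineB.
Qed.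

Lemma integ_cvx n (lam : 'I_n -> R) (lam0 : forall i, (0 <= lam i)%R) (lam1 : (\sum_i lam i)%R = 1%R)
  (mus : 'I_n -> bprob R X) (f : X -> R) (M : R)
  (mf : measurable_fun [set: borel X] f) (hM : forall x, (`|f x| <= M)%R) :
  integ (cvxp lam0 lam1 mus) f = (\sum_i lam i * integ (mus i) f)%R.
Proof.
have mg : measurable_fun [set: borel X] (ef f) by apply/measurable_EFinP.
have key (g : borel X -> \bar R) : measurable_fun setT g -> (forall x, 0 <= g x) ->
  \int[cvxp lam0 lam1 mus]_x g x = \sum_i (lam i)%:E * \int[mus i]_x g x.
  move=> mg' g0; transitivity (\int[msum (seqm lam0 mus) n]_x g x); first by rewrite -cvx_msum.
  rewrite ge0_integral_measure_sum //.
  apply: eq_bigr => i _; rewrite /seqm valK ge0_integral_mscale //.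
rewrite (integE _ mf hM) key; [|exact: measurable_funepos| by move=> x; exact: funepos_ge0].
rewrite key; [|exact: measurable_funeneg| by move=> x; exact: funeneg_ge0].
have F1 i := (pos_fin (mus i) mf hM).1.
have F2 i := (pos_fin (mus i) mf hM).2.
rewrite (eq_bigr (fun i => (lam i * fine (\int[mus i]_x ((ef f)^\+ x)))%:E)); last first.
  by move=> i _; rewrite EFinM fineK.
rewrite [X in (_ - fine X)%R](eq_bigr (fun i => (lam i * fine (\int[mus i]_x ((ef f)^\- x)))%:E)); last first.
  by move=> i _; rewrite EFinM fineK.
rewrite !sumEFin /= -sumrB; apply: eq_bigr => i _.
by rewrite (integE _ mf hM) mulrBr.
Qed.
Lemma integ_bnd (mu : bprob R X) (f : X -> R) (M : R)
  (mf : measurable_fun [set: borel X] f) (hM : forall x, (`|f x| <= M)%R) :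
  (`|integ mu f| <= M)%R.
Proof.
have mg : measurable_fun [set: borel X] (ef f) by apply/measurable_EFinP.
have H (g : borel X -> \bar R) : measurable_fun setT g -> (forall x, (0 <= g x <= M%:E)%E) ->
   (0 <= fine (\int[mu]_x g x) <= M)%R.
  move=> mg' hg.
  have i0 : (0 <= \int[mu]_x g x)%E by apply: integral_ge0 => x _; case/andP: (hg x).
  have iM : (\int[mu]_x g x <= M%:E)%E.
    apply: (@le_trans _ _ (\int[mu]_x (cst M%:E) x)).
      apply: ge0_le_integral => //; first by move=> x _; case/andP: (hg x).
      by move=> x _; case/andP: (hg x).
    by rewrite integral_cst // (_ : (mu : {measure set (borel X) -> \bar R}) setT = 1%E) ?mule1 //; exact: probability_setT.
  have fn : (\int[mu]_x g x) \is a fin_num by rewrite ge0_fin_numE // (le_lt_trans iM) ?ltry.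
  by rewrite fine_ge0 //= -lee_fin fineK.
have /andP[a1 a2] : (0 <= fine (\int[mu]_x ((ef f)^\+ x)) <= M)%R.
  apply: H; first exact: measurable_funepos.
  move=> x; rewrite funepos_ge0 /= funeposE /= ge_max lee_fin (le_trans _ (hM x)) ?ler_norm //=.
  by rewrite lee_fin (le_trans _ (hM x)).
have /andP[b1 b2] : (0 <= fine (\int[mu]_x ((ef f)^\- x)) <= M)%R.
  apply: H; first exact: measurable_funeneg.
  move=> x; rewrite funeneg_ge0 /= funenegE /= ge_max lee_fin (le_trans _ (hM x)) ?ler_normr ?lexx ?orbT //=.
  by rewrite lee_fin (le_trans _ (hM x)).
rewrite (integE _ mf hM).
by rewrite ler_norml; apply/andP; split; lra.
Qed.

Lemma cvx_inv (T : X -> X) n (lam : 'I_n -> R)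
  (lam0 : forall i, (0 <= lam i)%R) (lam1 : (\sum_i lam i)%R = 1%R)
  (mus : 'I_n -> bprob R X) : (forall i, Defs.invariant T (mus i)) ->
  Defs.invariant T (cvxp lam0 lam1 mus).
Proof.
move=> h A mA; rewrite /=; apply: eq_bigr => i _; by rewrite h.
Qed.

End Integ.

Lemma cont_meas (R : realType) (X : ptopologicalType) (f : X -> R) :
  continuous f -> measurable_fun [set: borel X] f.
Proof.
move=> /continuousP cf; apply: (measurability _ (RGenOpens.measurableE R)).
move=> _ [_ [a [b ->] <-]]; rewrite setTI; apply: sub_sigma_algebra.
exact/cf/interval_open.
Qed.

Lemma cont_bnd (R : realType) (X : ptopologicalType) (cX : compact [set: X]) (f : X -> R) :
  continuous f -> exists M, forall x, `|f x| <= M.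
Proof.
move=> cf.
have : compact (f @` [set: X]).
  by apply: continuous_compact => //; apply: continuous_subspaceT.
move=> /(@compact_bounded R R^o) [M [_ HM]].
exists (M + 1) => x; apply: (HM (M + 1)); first by rewrite ltrDl.
by exists x.
Qed.

Section LA.
Context (R : realFieldType) (d : nat).

Lemma est (x y : 'rV[R]_d) (E : 'M[R]_d) (eta b : R)
  (e0 : 0 <= eta) (hE : forall i j, `|E i j| <= eta)
  (hx : x *m (1%:M + E) = y) (b0 : 0 <= b) (hy : forall j, `|y 0 j| <= b)
  (he : d%:R * eta <= 1/2) :
  forall j, `|x 0 j| <= 2 * b.
Proof.
set m := \big[Num.max/0]_j `|x 0 j|.
have hm j : `|x 0 j| <= m.
  exact: le_bigmax.
have m0 : 0 <= m by exact: bigmax_ge_id.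
have xe j : `|(x *m E) 0 j| <= d%:R * eta * m.
  rewrite mxE (le_trans (ler_norm_sum _ _ _)) //.
  apply: (@le_trans _ _ (\sum_(i < d) eta * m)); last by rewrite sumr_const card_ord -[X in X <= _]mulr_natl mulrA.
  apply: ler_sum => i _; rewrite normrM mulrC; apply: ler_pM => //.
have xeq j : x 0 j = y 0 j - (x *m E) 0 j.
  by rewrite -hx mulmxDr mulmx1 !mxE addrK.
have hb : m <= b + d%:R * eta * m.
  apply: bigmax_le; first by apply: addr_ge0 => //; rewrite !mulr_ge0.
  move=> j _; rewrite xeq (le_trans (ler_normB _ _)) // lerD //.
move=> j; apply: (le_trans (hm j)).
move: hb he; move: (d%:R * eta) => de hb he.
have h2 : 0 <= (1/2 - de) * m by apply: mulr_ge0 => //; rewrite subr_ge0.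
nra.
Qed.

Lemma perturb (E : 'M[R]_d) (y : 'rV[R]_d) (eta c : R)
  (e0 : 0 <= eta) (c0 : 0 <= c) (hE : forall i j, `|E i j| <= eta)
  (hy : forall j, `|y 0 j - c| <= eta)
  (he : d%:R * eta <= 1/2) :
  (1%:M + E) \in unitmx /\
  forall j, `|(y *m invmx (1%:M + E)) 0 j - c| <= eta + d%:R * eta * (2 * (c + eta)).
Proof.
have U : (1%:M + E) \in unitmx.
  rewrite -row_free_unit -kermx_eq0; apply/eqP/matrixP => i j.
  have h1 : row i (kermx (1%:M + E)) *m (1%:M + E) = 0 by rewrite -row_mul mulmx_ker row0.
  have hy0 : forall j', `|(0 : 'rV[R]_d) 0 j'| <= 0 by move=> j'; rewrite mxE normr0.
  have := est e0 hE h1 (lexx 0) hy0 he j.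
  by rewrite mulr0 normr_le0 => /eqP; rewrite [row _ _ _ _]mxE => ->; rewrite mxE.
split => // j.
set x := y *m invmx (1%:M + E).
have hx : x *m (1%:M + E) = y by rewrite /x mulmxKV.
have hyb j' : `|y 0 j'| <= c + eta.
  by rewrite -[y 0 j'](subrK c) (le_trans (ler_normD _ _)) // addrC lerD // ger0_norm.
have hm := est e0 hE hx (addr_ge0 c0 e0) hyb he.
have xe : `|(x *m E) 0 j| <= d%:R * eta * (2 * (c + eta)).
  rewrite mxE (le_trans (ler_norm_sum _ _ _)) //.
  apply: (@le_trans _ _ (\sum_(i < d) eta * (2 * (c + eta)))); last by rewrite sumr_const card_ord -[X in X <= _]mulr_natl mulrA.
  apply: ler_sum => i _; rewrite normrM mulrC; apply: ler_pM => //.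
have xeq : x 0 j = y 0 j - (x *m E) 0 j.
  by rewrite -hx mulmxDr mulmx1 !mxE addrK.
rewrite xeq addrAC (le_trans (ler_normB _ _)) // lerD //.
Qed.

Lemma combo_bound (k : nat) (lam A r : 'I_k -> R) (b t e M : R) :
  (forall j, 0 <= lam j) -> \sum_j lam j = 1 ->
  (forall j, `|A j - ((1 - t) * b + t * r j)| <= e) ->
  (forall j, `|r j| <= M) -> `|b| <= M -> 0 <= t ->
  `|\sum_j lam j * A j - b| <= e + t * (2 * M).
Proof.
move=> l0 l1 hA hr hb t0.
have S1 : \sum_j lam j * (A j - ((1 - t) * b + t * r j)) =
    \sum_j lam j * A j - ((1-t)*b) * \sum_j lam j - t * \sum_j lam j * r j.
  rewrite !mulr_sumr -!sumrB; apply: eq_bigr => j _; ring.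
have -> : \sum_j lam j * A j - b =
   \sum_j lam j * (A j - ((1 - t) * b + t * r j)) + t * (\sum_j lam j * r j - b).
  by rewrite S1 l1; ring.
apply: (le_trans (ler_normD _ _)); apply: lerD.
  apply: (le_trans (ler_norm_sum _ _ _)).
  apply: (@le_trans _ _ (\sum_j lam j * e)); last by rewrite -mulr_suml l1 mul1r.
  by apply: ler_sum => j _; rewrite normrM ger0_norm // ler_wpM2l.
rewrite normrM ger0_norm // ler_wpM2l //.
apply: (le_trans (ler_normB _ _)); rewrite -[2]/(1+1) mulrDl mul1r; apply: lerD => //.
apply: (le_trans (ler_norm_sum _ _ _)).
apply: (@le_trans _ _ (\sum_j lam j * M)); last by rewrite -mulr_suml l1 mul1r.
by apply: ler_sum => j _; rewrite normrM ger0_norm // ler_wpM2l.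
Qed.

Definition lam2 (t : R) : 'I_2 -> R := fun i => if i == ord0 then 1 - t else t.
Lemma lam2_ge0 (t : R) : 0 <= t <= 1 -> forall i, 0 <= lam2 t i.
Proof. by case/andP => t0 t1 i; rewrite /lam2; case: ifP => // _; rewrite subr_ge0. Qed.
Lemma lam2_sum (t : R) : \sum_i lam2 t i = 1.
Proof. by rewrite big_ord_recr big_ord1 /lam2 /=; ring. Qed.

Lemma etas (dd c eta : R) : 1 <= dd -> 0 < c -> c <= 1/2 -> 0 < eta ->
  eta * (16 * (dd + 1) ^+ 2) = c ->
  dd * (2 * eta) <= 1/2 /\ 2 * eta + dd * (2 * eta) * (2 * (c + 2 * eta)) <= c / (4 * (dd + 1)) /\ 0 < c / (4 * (dd + 1)) /\ c / (4 * (dd + 1)) < c /\ dd * (c / (4 * (dd + 1))) < c.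
Proof.
move=> dd1 c0 c12 eta0 etaE.
have q4 : 4 <= (dd + 1) ^+ 2 by rewrite expr2; nra.
have e64 : 64 * eta <= c by rewrite -etaE; nra.
split.
  have : 2 * dd <= 16 * (dd + 1) ^+ 2 by rewrite expr2; nra.
  rewrite -etaE in c12; nra.
split.
  have e1 : c + 2 * eta <= 1 by lra.
  have e2 : 2 * eta + dd * (2 * eta) * (2 * (c + 2 * eta)) <= 4 * (dd + 1) * eta.
    have h3 : 0 <= 1 - (c + 2 * eta) by lra.
    have := mulr_ge0 (mulr_ge0 (ltW (lt_le_trans ltr01 dd1)) (ltW eta0)) h3.
    have : 0 <= dd by lra.
    nra.
  rewrite ler_pdivlMr; last lra.
  apply: (le_trans (ler_wpM2r _ e2)); first lra.
  rewrite -[X in _ <= X]etaE; rewrite expr2; lra.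
split; first by rewrite divr_gt0 //; lra.
split; first by rewrite ltr_pdivrMr; [nra | lra].
by rewrite mulrA ltr_pdivrMr; [nra | lra].
Qed.

Lemma weights (x : 'rV[R]_d) (c err : R) : (0 < d)%N -> 0 < c -> d%:R * c + c = 1 ->
  0 < err -> err < c -> d%:R * err < c -> (forall k, `|x 0 k - c| <= err) ->
  exists lam : 'I_d.+1 -> R, (forall j, 0 < lam j < 1) /\ \sum_j lam j = 1 /\ (forall i, lam (widen_ord (leqnSn d) i) = x 0 i) /\ lam ord_max = 1 - \sum_k x 0 k.
Proof.
move=> hd c0 dc err0 errc derr hxe.
have xb k : c - err <= x 0 k <= c + err.
  by have := hxe k; rewrite ler_norml => /andP[h1 h2]; apply/andP; split; lra.
have hxpos k : 0 < x 0 k by case/andP: (xb k) => h1 h2; lra.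
have d1 : 1 <= d%:R :> R by rewrite ler1n.
have hxlt1 k : x 0 k < 1 by case/andP: (xb k) => h1 h2; nra.
have sx1 : \sum_k x 0 k < 1.
  apply: (@le_lt_trans _ _ (\sum_(k < d) (c + err))).
    by apply: ler_sum => k _; case/andP: (xb k).
  rewrite sumr_const card_ord -mulr_natl; lra.
have sx0 : 0 < \sum_k x 0 k.
  apply: (@lt_le_trans _ _ (\sum_(k < d) (c - err))).
    rewrite sumr_const card_ord -mulr_natl; apply: mulr_gt0; last lra.
    by rewrite ltr0n.
  by apply: ler_sum => k _; case/andP: (xb k).
pose lam (j : 'I_d.+1) := oapp (fun k => x 0 k) (1 - \sum_k x 0 k) (unlift ord_max j).
have wdl i : widen_ord (leqnSn d) i = lift ord_max i.
  by apply: val_inj; rewrite /= /bump leqNgt ltn_ord.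
have lamW i : lam (widen_ord (leqnSn d) i) = x 0 i by rewrite /lam wdl liftK.
have lamM : lam ord_max = 1 - \sum_k x 0 k by rewrite /lam unlift_none.
exists lam; split.
  move=> j; case: (unliftP ord_max j) => [k ->|->].
    by rewrite -wdl lamW hxpos hxlt1.
  rewrite lamM; apply/andP; split; lra.
split; last by split.
rewrite big_ord_recr /= lamM (eq_bigr (fun i => x 0 i)); last by move=> i _; exact: lamW.
ring.
Qed.
End LA.

Unset Implicit Arguments.
Theorem mainTheorem3 (R : realType) (X : pseudoPMetricType R)
  (hX : hausdorff_space X) (cX : compact [set: X])
  (T : X -> X) (cT : continuous T)
  (hdense : weak_dense_in (@MTp R X T) (@MT R X T))
  (d : nat) (hd : (0 < d)%N)
  (phi : X -> 'rV[R]_d) (cphi : continuous phi)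
  (h : 'rV[R]_d) (hh : interior (Rot T phi) h) :
  weak_dense_in (NT T phi) ((rv phi @^-1` [set h]) `&` @MT R X T).
Proof.
move=> mu [rvmu MTmu] n fs cfs eps eps0.
have [Mf hMf] := choice (fun k => cont_bnd cX (cfs k)).
pose Mx := \big[Num.max/1]_k Mf k.
have hMx k x : `|fs k x| <= Mx by apply: (le_trans (hMf k x)); exact: le_bigmax.
have Mx1 : 1 <= Mx by exact: bigmax_ge_id.
pose pc (b : 'I_d) := fun x => phi x ord0 b.
have cpc b : continuous (pc b).
  move=> x; exact: (@continuous_comp _ _ _ phi (fun M : 'rV[R]_d => M ord0 b) x (cphi x) (@coord_continuous R 1 d ord0 b (phi x))).
have [Mp hMp] := choice (fun b => cont_bnd cX (cpc b)).
have mfs k : measurable_fun [set: borel X] (fs k) by exact: cont_meas.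
have mpc b : measurable_fun [set: borel X] (pc b) by exact: cont_meas.
move/nbhs_ballP: hh => [r r0 hr].
pose c : R := (d.+1%:R)^-1.
have c0 : 0 < c by rewrite invr_gt0 ltr0n.
have dc : d%:R * c + c = 1 by rewrite /c -[X in _ + X]mul1r -mulrDl natr1 mulfV // pnatr_eq0.
have d1 : 1 <= d%:R :> R by rewrite ler1n.
have c12 : c <= 1/2.
  clearbody c; nra.
clearbody c.
pose s := r / 2.
have s0 : 0 < s by rewrite divr_gt0.
pose v (j : 'I_d.+1) : 'rV[R]_d := \row_k (((j : nat) == (k : nat))%:R - c).
have hv j k : `|v j 0 k| <= 1.
  rewrite mxE; case: eqP => _; rewrite /= ?sub0r ?normrN ger0_norm; lra.
pose w j := h + s *: v j.
have Rw j : exists rho, @MT R X T rho /\ rv phi rho = w j.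
  have : Rot T phi (w j).
    apply: hr; split => // i k; rewrite /ball /= !mxE opprD addNKr normrN normrM.
    rewrite ger0_norm ?(ltW s0) //; apply: (@le_lt_trans _ _ (s * 1)).
      by apply: ler_wpM2l; [exact: ltW | have := hv j k; rewrite mxE].
    by rewrite mulr1 /s ltr_pdivrMr ?ltr0n // ltr_pMr ?ltr1n.
  by case=> rho ? ?; exists rho.
have [rho hrho] := choice Rw.
pose t := Num.min (1/2) (eps / (8 * Mx)).
have Mx0 : 0 < Mx by exact: (lt_le_trans ltr01 Mx1).
have t0 : 0 < t by rewrite lt_min; apply/andP; split; [lra | rewrite divr_gt0 //; lra].
have t12 : t <= 1/2 by rewrite ge_min lexx.
have tM : t * (2 * Mx) <= eps / 4.
  have : t <= eps / (8 * Mx) by rewrite ge_min lexx orbT.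
  rewrite ler_pdivlMr; last lra.
  move=> H; rewrite ler_pdivlMr; last lra.
  lra.
clearbody t.
have ht01 : 0 <= t <= 1 by apply/andP; split; lra.
pose mus2 (j : 'I_d.+1) (i : 'I_2) := if i == ord0 then mu else rho j.
pose m j := cvxp (lam2_ge0 ht01) (lam2_sum t) (mus2 j).
have MTm j : @MT R X T (m j).
  apply: cvx_inv => i; rewrite /mus2; case: ifP => _; [exact: MTmu | exact: (hrho j).1].
have Im j f (cf : continuous f) : integ (m j) f = (1 - t) * integ mu f + t * integ (rho j) f.
  have [M hM] := cont_bnd cX cf.
  by rewrite (integ_cvx _ _ _ (cont_meas cf) hM) big_ord_recr big_ord1 /lam2 /mus2 /=.
have rvE nu k : rv phi nu 0 k = integ nu (pc k) by rewrite mxE.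
have rvm j k : rv phi (m j) 0 k = h 0 k + t * s * v j 0 k.
  rewrite rvE Im // -!rvE rvmu (hrho j).2 /w !mxE; ring.
pose sig := t * s.
have sig0 : 0 < sig by rewrite mulr_gt0.
pose dd : R := d%:R.
pose eta := c / (16 * (dd + 1) ^+ 2).
have eta0 : 0 < eta by rewrite divr_gt0 // mulr_gt0 // exprn_gt0 //; lra.
have etaE : eta * (16 * (dd + 1) ^+ 2) = c by rewrite /eta divfK //; apply/lt0r_neq0; rewrite mulr_gt0 // exprn_gt0 //; lra.
clearbody eta.
pose eps' := Num.min (eps / 2) (sig * eta).
have eps'0 : 0 < eps' by rewrite lt_min; apply/andP; split; [lra | exact: mulr_gt0].
pose G (k : 'I_(n + d)) : X -> R := match fintype.split k with inl a => fs a | inr b => pc b end.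
have cG k : continuous (G k) by rewrite /G; case: (fintype.split k) => [a|b]; [exact: cfs | exact: cpc].
have happ (j : 'I_d.+1) : exists nu, @MTp R X T nu /\ @MT R X T nu /\
    forall k, `|integ nu (G k) - integ (m j) (G k)| < eps'.
  exact: (hdense _ (MTm j) _ G cG _ eps'0).
have [mus hmus] := choice happ.
have hf j a : `|integ (mus j) (fs a) - integ (m j) (fs a)| < eps / 2.
  have := (hmus j).2.2 (unsplit (inl a)); rewrite /G unsplitK => H.
  by apply: (lt_le_trans H); rewrite ge_min lexx.
have hp j b : `|rv phi (mus j) 0 b - (h 0 b + sig * v j 0 b)| < sig * eta.
  have := (hmus j).2.2 (unsplit (inr b)); rewrite /G unsplitK -!rvE rvm => H.
  by apply: (lt_le_trans H); rewrite ge_min lexx orbT.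
pose wd := widen_ord (leqnSn d).
pose N := \matrix_(i < d) (rv phi (mus (wd i)) - rv phi (mus ord_max)).
have Nik i k : N i k = rv phi (mus (wd i)) 0 k - rv phi (mus ord_max) 0 k.
  by rewrite /N [in LHS]mxE [in LHS]mxE [X in _ + X = _]mxE.
clearbody N.
have vw i k : v (wd i) 0 k = ((i == k) : nat)%:R - c by rewrite mxE.
have vm k : v ord_max 0 k = - c by rewrite mxE /= gtn_eqF // sub0r.
have sigN : sig != 0 by exact: lt0r_neq0.
have hs a : `|a| < sig * eta -> `|sig^-1 * a| <= eta.
  move=> ha; rewrite normrM ger0_norm ?invr_ge0 ?(ltW sig0) // mulrC ler_pdivrMr //.
  by rewrite mulrC; exact: ltW.
pose E := sig^-1 *: N - 1%:M.
have Eik0 i k : E i k = sig^-1 * N i k - ((i == k) : nat)%:R by rewrite /E !mxE.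
have Eik i k : E i k = sig^-1 * (rv phi (mus (wd i)) 0 k - (h 0 k + sig * v (wd i) 0 k))
    - sig^-1 * (rv phi (mus ord_max) 0 k - (h 0 k + sig * v ord_max 0 k)).
  by rewrite Eik0 Nik vw vm; field.
clearbody E.
have hE i k : `|E i k| <= 2 * eta.
  rewrite Eik (le_trans (ler_normB _ _)) // -[2]/(1+1) mulrDl mul1r.
  by apply: lerD; apply: hs; apply: hp.
pose y := sig^-1 *: (h - rv phi (mus ord_max)).
have hy k : `|y 0 k - c| <= 2 * eta.
  have -> : y 0 k - c = - (sig^-1 * (rv phi (mus ord_max) 0 k - (h 0 k + sig * v ord_max 0 k))).
    by rewrite /y [in LHS]mxE [X in _ * X - _ = _]mxE [X in _ * (_ + X) - _ = _]mxE vm; field.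
  rewrite normrN (le_trans (hs _ (hp _ _))) //; lra.
have yk k : y 0 k = sig^-1 * (h 0 k - rv phi (mus ord_max) 0 k).
  by rewrite /y [in LHS]mxE [X in _ * X = _]mxE [X in _ * (_ + X) = _]mxE.
clearbody y.
have dd1 : 1 <= dd by [].
have [he [herr [err0 [errc derr]]]] := etas dd1 c0 c12 eta0 etaE.
have [U hxc] := perturb (ltW (mulr_gt0 (ltr0n R 2) eta0)) (ltW c0) hE hy he.
pose x := y *m invmx (1%:M + E).
have hx : x *m (1%:M + E) = y by rewrite /x mulmxKV.
have hxe k : `|x 0 k - c| <= c / (4 * (dd + 1)) := le_trans (hxc k) herr.
clearbody x.
have [lam [lampos [lam1 [lamW lamM]]]] := weights hd c0 dc err0 errc derr hxe.
have lam0 j : 0 <= lam j by case/andP: (lampos j) => /ltW.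
pose nu := cvxp lam0 lam1 mus.
have NTm : \matrix_(i < d) (rv phi (mus (widen_ord (leqnSn d) i)) - rv phi (mus ord_max))
    = sig *: (1%:M + E).
  apply/matrixP => i k; rewrite [in LHS]mxE [in LHS]mxE [X in _ + X = _]mxE.
  by rewrite [in RHS]mxE [X in _ = _ * X]mxE [X in _ = _ * (X + _)]mxE Eik0 Nik -[widen_ord _ i]/(wd i); field.
exists nu; split.
  exists mus, lam; split; first by move=> i; exact: (hmus i).1.
  split; first exact: lampos.
  split; first exact: lam1.
  split; first by [].
  by rewrite NTm row_full_unit unitmxZ // unitfE.
split; last first.
  move=> a.
  rewrite (integ_cvx lam0 lam1 mus (mfs a) (hMx a)).
  apply: (le_lt_trans (@combo_bound R d.+1 lam (fun j => integ (mus j) (fs a))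
     (fun j => integ (rho j) (fs a)) (integ mu (fs a)) t (eps/2) Mx lam0 lam1 _ _ _ (ltW t0))).
  - move=> j; rewrite -(Im j _ (cfs a)); exact: ltW (hf j a).
  - move=> j; exact: integ_bnd (mfs a) (hMx a).
  - exact: integ_bnd (mfs a) (hMx a).
  - clear -tM eps0; lra.
split; last first.
  exact: (@cvx_inv R X T _ lam lam0 lam1 mus (fun j => (hmus j).2.1)).
rewrite /preimage /=.
apply/matrixP => i k; rewrite (ord1 i) {i}.
rewrite rvE (integ_cvx lam0 lam1 mus (mpc k) (hMp k)).
under eq_bigr => j _ do rewrite -rvE.
rewrite big_ord_recr /= lamM.
under eq_bigr => i _ do rewrite lamW.
have ME i : (1%:M + E) i k = sig^-1 * N i k.
  rewrite [LHS]mxE Eik0 [X in X + _ = _]mxE; ring.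
have key : (x *m (1%:M + E)) 0 k = y 0 k by rewrite hx.
rewrite [LHS]mxE yk in key.
rewrite (eq_bigr (fun i => sig^-1 * (x 0 i * rv phi (mus (widen_ord (leqnSn d) i)) 0 k - x 0 i * rv phi (mus ord_max) 0 k))) in key; last first.
  by move=> i _; rewrite ME Nik /wd; ring.
rewrite -mulr_sumr sumrB -mulr_suml in key.
move/(congr1 (fun z => sig * z)): key; rewrite !mulrA mulfV // !mul1r => key.
clear -key; lra.
Qed.
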